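(* Let $G$ consist of two parallel paths $P_1,P_2$ from $s$ to $d$ (of arbitrary lengths), let the inputs be constant, $f_s(t)=\bar f>0$ and $b_d(t)=\bar b>0$ for all $t$, and let $g\in\mathcal F$ be non-linear, i.e. $g(x)\neq x$ for some $x\in[0,1/2]$. Then there exist leakage parameters $(l_v)_v$ with $l_{P_1}<l_{P_2}$ (so $P_1$ is the unique minimum-leakage path), depending on $g$, $\bar f$ and $\bar b$, and an initial configuration (positive pheromone levels on all edges and nonnegative initial flows), such that under the dynamics governed by $g$, $\nu^f_{ss_1}(t)$ does not converge to $1$ as $t\to\infty$.
   Context: Model. Directed graph $G=(V,E)$ with source $s$, destination $d$; discrete time $t=0,1,\dots$; pheromone levels $p_{uv}(t)\ge0$ on edges, forward flows $f_v(t)\ge0$ and backward flows $b_v(t)\ge0$ at vertices; leakage parameters $l_v\in[0,1]$ and decay parameter $\delta\in(0,1)$. $f_s(t)$ and $b_d(t)$ are exogenous inputs. Flow update: for $v\ne s$, $f_v(t+1)=(1-l_v)\sum_{z:(z,v)\in E}f_{zv}(t)$; for $u\ne d$, $b_u(t+1)=(1-l_u)\sum_{z:(u,z)\in E}b_{uz}(t)$; pheromone update $p_{uv}(t+1)=\delta(p_{uv}(t)+f_{uv}(t)+b_{uv}(t))$. Normalized pheromone levels $\nu^f_{uv}(t)=p_{uv}(t)/\sum_{z:(u,z)\in E}p_{uz}(t)$, $\nu^b_{uv}(t)=p_{uv}(t)/\sum_{z:(z,v)\in E}p_{zv}(t)$. Path leakage $l_P=1-\prod_{v\in P\setminus\{s,d\}}(1-l_v)$.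 Two parallel paths: $G$ is the union of two directed paths $P_1,P_2$ from $s$ to $d$ sharing only $s$ and $d$; $s_1,s_2$ are the successors of $s$ and $d_1,d_2$ the predecessors of $d$ on $P_1,P_2$. Family $\mathcal F$: continuous, monotonically non-decreasing functions $g:[0,1/2]\to[0,1]$ with $g(0)=0$ and $g(1/2)=1/2$. The dynamics governed by $g$: at every vertex of out-degree (resp. in-degree) one, the entire forward (resp. backward) flow goes along the unique edge; at $s$, with $x=\min(\nu^f_{ss_1}(t),\nu^f_{ss_2}(t))$, the edge attaining the minimum receives forward flow $g(x)f_s(t)$ and the other edge receives $(1-g(x))f_s(t)$ (if $x=1/2$ each receives $f_s(t)/2$); at $d$ the backward flow $b_d(t)$ is split between $(d_1,d)$ and $(d_2,d)$ in the same way using $\nu^b_{d_1d}(t),\nu^b_{d_2d}(t)$. The linear decision rule corresponds to $g(x)=x$. *)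

(* Defs.v *)
From Stdlib Require Import Reals Arith.
Open Scope R_scope.

(* Graph: two parallel paths P1, P2 from s to d, sharing only s and d.
   Path i has [len i] interior vertices, numbered 1..len i
   (vertex 0 is s, vertex len i + 1 is d), and len i + 1 edges numbered
   0..len i, edge j going from vertex j to vertex j+1.
   Edge 0 of path i is (s, s_i); edge len i is (d_i, d). *)
Inductive path_id := P1 | P2.
Definition other (i : path_id) : path_id := match i with P1 => P2 | P2 => P1 end.

Definition in_family (g : R -> R) : Prop :=
  (forall x, 0 <= x <= 1/2 -> forall eps, 0 < eps ->
     exists delta, 0 < delta /\
       forall y, 0 <= y <= 1/2 -> Rabs (y - x) < delta -> Rabs (g y - g x) < eps) /\
  (forall x y, 0 <= x -> x <= y -> y <= 1/2 -> g x <= g y) /\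
  (forall x, 0 <= x <= 1/2 -> 0 <= g x <= 1) /\
  g 0 = 0 /\ g (1/2) = 1/2.

Definition nonlinear (g : R -> R) : Prop := exists x, 0 <= x <= 1/2 /\ g x <> x.

Definition split_share (g : R -> R) (nu_self nu_other : R) : R :=
  if Rlt_dec nu_self nu_other then g nu_self
  else if Rlt_dec nu_other nu_self then 1 - g nu_other
  else 1/2.

(* p i j t : pheromone on edge j of path i at time t. *)
Definition nu_f (p : path_id -> nat -> nat -> R) (t : nat) (i : path_id) : R :=
  p i 0%nat t / (p i 0%nat t + p (other i) 0%nat t).

Definition nu_b (len : path_id -> nat) (p : path_id -> nat -> nat -> R)
  (t : nat) (i : path_id) : R :=
  p i (len i) t / (p i (len i) t + p (other i) (len (other i)) t).

(* forward flow on edge j of path i at time t (f i j t = forward flow at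
   interior vertex j); the edge out of s receives its g-share of fbar. *)
Definition fedge (g : R -> R) (fbar : R) (p : path_id -> nat -> nat -> R)
  (f : path_id -> nat -> nat -> R) (i : path_id) (j t : nat) : R :=
  match j with
  | O => split_share g (nu_f p t i) (nu_f p t (other i)) * fbar
  | _ => f i j t
  end.

(* backward flow on edge j of path i at time t (b i j t = backward flow at
   interior vertex j); the edge into d receives its g-share of bbar. *)
Definition bedge (g : R -> R) (len : path_id -> nat) (bbar : R)
  (p : path_id -> nat -> nat -> R) (b : path_id -> nat -> nat -> R)
  (i : path_id) (j t : nat) : R :=
  if Nat.eqb j (len i)
  then split_share g (nu_b len p t i) (nu_b len p t (other i)) * bbar
  else b i (S j) t.

Definition is_trajectory (g : R -> R) (len : path_id -> nat)
  (l : path_id -> nat -> R) (delta fbar bbar : R)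
  (p f b : path_id -> nat -> nat -> R) : Prop :=
  forall t : nat,
    (forall i j, (j <= len i)%nat ->
       p i j (S t) = delta * (p i j t + fedge g fbar p f i j t
                                      + bedge g len bbar p b i j t)) /\
    (forall i j, (1 <= j <= len i)%nat ->
       f i j (S t) = (1 - l i j) * fedge g fbar p f i (j - 1) t) /\
    (forall i j, (1 <= j <= len i)%nat ->
       b i j (S t) = (1 - l i j) * bedge g len bbar p b i j t).

Fixpoint prod_keep (l : nat -> R) (n : nat) : R :=
  match n with
  | O => 1
  | S m => prod_keep l m * (1 - l (S m))
  end.

Definition path_leak (len : path_id -> nat) (l : path_id -> nat -> R) (i : path_id) : R :=
  1 - prod_keep (l i) (len i).

(* Main.v *)
Require Import Defs.
From Stdlib Require Import Reals Arith Lra Lia Psatz.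
Open Scope R_scope.

Definition lK (K : R) : path_id -> nat -> R :=
  fun i j => match i with P1 => 0 | P2 => if Nat.eqb j 1 then 1 - K else 0 end.

Definition Inv (len : path_id -> nat) (al ga K fbar bbar : R)
  (p f b : path_id -> nat -> nat -> R) (t : nat) : Prop :=
  (forall i j, (j <= len i)%nat -> 0 < p i j t) /\
  al * p P1 0%nat t <= (1 - al) * p P2 0%nat t /\
  al * p P1 (len P1) t <= (1 - al) * p P2 (len P2) t /\
  (forall j, (1 <= j <= len P1)%nat ->
     (0 <= f P1 j t <= (1 - ga) * fbar) /\ (0 <= b P1 j t <= (1 - ga) * bbar)) /\
  (forall j, (1 <= j <= len P2)%nat ->
     ga * K * fbar <= f P2 j t /\ ga * K * bbar <= b P2 j t /\
     ((2 <= j)%nat -> ga * bbar <= b P2 j t)).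

Lemma ratio_facts al a b : 0 < a -> 0 < b -> al * b <= (1 - al) * a ->
  0 <= a / (a + b) /\ 0 <= b / (b + a) /\ a / (a + b) + b / (b + a) = 1 /\
  al <= a / (a + b).
Proof.
  intros Ha Hb H.
  split. { unfold Rdiv; apply Rmult_le_pos; [lra| left; apply Rinv_0_lt_compat; lra]. }
  split. { unfold Rdiv; apply Rmult_le_pos; [lra| left; apply Rinv_0_lt_compat; lra]. }
  split. { field; lra. }
  apply (Rmult_le_reg_r (a + b)); [lra|].
  unfold Rdiv; rewrite Rmult_assoc, Rinv_l by lra. nra.
Qed.

Lemma ratio_le al a b : 0 < a -> 0 < b -> al * b <= (1 - al) * a ->
  b / (b + a) <= 1 - al.
Proof.
  intros Ha Hb H.
  apply (Rmult_le_reg_r (b + a)); [lra|].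
  unfold Rdiv; rewrite Rmult_assoc, Rinv_l by lra. nra.
Qed.

Section Gen.
Variables (g : R -> R) (len : path_id -> nat) (delta fbar bbar al ga K : R).
Hypothesis Hshare : forall u v, 0 <= u -> 0 <= v -> u + v = 1 -> al <= u ->
  ga <= split_share g u v <= 1 /\ 0 <= split_share g v u <= 1 - ga.
Hypothesis Hlen : (1 <= len P2)%nat.
Hypothesis Hd : 0 < delta.
Hypothesis Hf : 0 < fbar.
Hypothesis Hb : 0 < bbar.
Hypothesis Hal : 0 < al < 1.
Hypothesis Hga : 0 < ga <= 1.
Hypothesis HK : 0 < K < 1.
Hypothesis HkK : al * (1 - ga) <= (1 - al) * ga * K.

Variables (p f b : path_id -> nat -> nat -> R).

Lemma sh_f t : Inv len al ga K fbar bbar p f b t ->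
  ga <= split_share g (nu_f p t P2) (nu_f p t P1) <= 1 /\
  0 <= split_share g (nu_f p t P1) (nu_f p t P2) <= 1 - ga.
Proof.
  intros [Hp [H0 [Hl _]]].
  assert (A1 : 0 < p P1 0%nat t) by (apply Hp; lia).
  assert (A2 : 0 < p P2 0%nat t) by (apply Hp; lia).
  destruct (ratio_facts al _ _ A2 A1 H0) as [u1 [u2 [u3 u4]]].
  unfold nu_f; simpl other. apply Hshare; auto.
Qed.

Lemma sh_b t : Inv len al ga K fbar bbar p f b t ->
  ga <= split_share g (nu_b len p t P2) (nu_b len p t P1) <= 1 /\
  0 <= split_share g (nu_b len p t P1) (nu_b len p t P2) <= 1 - ga.
Proof.
  intros [Hp [H0 [Hl _]]].
  assert (A1 : 0 < p P1 (len P1) t) by (apply Hp; lia).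
  assert (A2 : 0 < p P2 (len P2) t) by (apply Hp; lia).
  destruct (ratio_facts al _ _ A2 A1 Hl) as [u1 [u2 [u3 u4]]].
  unfold nu_b; simpl other. apply Hshare; auto.
Qed.

Lemma E1 t : Inv len al ga K fbar bbar p f b t -> forall j, (j <= len P1)%nat ->
  0 <= fedge g fbar p f P1 j t <= (1 - ga) * fbar.
Proof.
  intros HI j Hj. destruct j as [|j].
  - simpl. destruct (sh_f t HI) as [_ S].
    split; [apply Rmult_le_pos; lra | apply Rmult_le_compat_r; lra].
  - simpl. destruct HI as [_ [_ [_ [H _]]]]. apply (H (S j)); lia.
Qed.

Lemma E2 t : Inv len al ga K fbar bbar p f b t -> forall j, (j <= len P1)%nat ->
  0 <= bedge g len bbar p b P1 j t <= (1 - ga) * bbar.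
Proof.
  intros HI j Hj. unfold bedge. destruct (Nat.eqb_spec j (len P1)).
  - destruct (sh_b t HI) as [_ S]. change (other P1) with P2.
    split; [apply Rmult_le_pos; lra | apply Rmult_le_compat_r; lra].
  - destruct HI as [_ [_ [_ [H _]]]]. apply (H (S j)); lia.
Qed.

Lemma E3 t : Inv len al ga K fbar bbar p f b t -> forall j, (j <= len P2)%nat ->
  ga * K * fbar <= fedge g fbar p f P2 j t /\ (j = 0%nat -> ga * fbar <= fedge g fbar p f P2 j t).
Proof.
  intros HI j Hj. destruct j as [|j].
  - simpl. destruct (sh_f t HI) as [S _].
    assert (ga * fbar <= split_share g (nu_f p t P2) (nu_f p t P1) * fbar) by
      (apply Rmult_le_compat_r; lra).
    assert (ga * fbar * K <= ga * fbar * 1) by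
      (apply Rmult_le_compat_l; [apply Rmult_le_pos|]; lra).
    split; [|intros _; lra]. lra.
  - simpl. split; [|intros; lia]. destruct HI as [_ [_ [_ [_ H]]]]. apply (H (S j)); lia.
Qed.

Lemma E4 t : Inv len al ga K fbar bbar p f b t -> forall j, (j <= len P2)%nat ->
  ga * K * bbar <= bedge g len bbar p b P2 j t /\
  ((1 <= j)%nat -> ga * bbar <= bedge g len bbar p b P2 j t).
Proof.
  intros HI j Hj. unfold bedge. destruct (Nat.eqb_spec j (len P2)).
  - destruct (sh_b t HI) as [S _]. change (other P2) with P1.
    assert (ga * bbar <= split_share g (nu_b len p t P2) (nu_b len p t P1) * bbar) by
      (apply Rmult_le_compat_r; lra).
    assert (ga * bbar * K <= ga * bbar * 1) by
      (apply Rmult_le_compat_l; [apply Rmult_le_pos|]; lra).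
    split; [|intros _; lra]. lra.
  - destruct HI as [_ [_ [_ [_ H]]]]. destruct (H (S j)) as [_ [H2 H3]]; [lia|].
    split; [exact H2|]. intros; apply H3; lia.
Qed.

Lemma ratio_step p1 p2 X Y :
  al * p1 <= (1 - al) * p2 -> 0 <= X <= (1 - ga) * (fbar + bbar) ->
  ga * K * (fbar + bbar) <= Y ->
  al * (delta * (p1 + X)) <= (1 - al) * (delta * (p2 + Y)).
Proof.
  intros H1 H2 H3.
  assert (al * X <= al * ((1 - ga) * (fbar + bbar))) by (apply Rmult_le_compat_l; lra).
  assert (al * ((1 - ga) * (fbar + bbar)) <= (1 - al) * ga * K * (fbar + bbar)) by
    (replace (al * ((1 - ga) * (fbar + bbar))) with (al * (1 - ga) * (fbar + bbar)) by ring;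
     apply Rmult_le_compat_r; lra).
  assert ((1 - al) * (ga * K * (fbar + bbar)) <= (1 - al) * Y) by (apply Rmult_le_compat_l; lra).
  assert (al * (p1 + X) <= (1 - al) * (p2 + Y)) by nra.
  replace (al * (delta * (p1 + X))) with (delta * (al * (p1 + X))) by ring.
  replace ((1 - al) * (delta * (p2 + Y))) with (delta * ((1 - al) * (p2 + Y))) by ring.
  apply Rmult_le_compat_l; lra.
Qed.

Lemma inv_all : is_trajectory g len (lK K) delta fbar bbar p f b ->
  Inv len al ga K fbar bbar p f b 0 -> forall t, Inv len al ga K fbar bbar p f b t.
Proof.
  intros HT H0 t. induction t as [|t IH]; [exact H0|].
  destruct (HT t) as [Tp [Tf Tb]].
  pose proof (E1 t IH) as e1. pose proof (E2 t IH) as e2.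
  pose proof (E3 t IH) as e3. pose proof (E4 t IH) as e4.
  assert (Ga : 0 <= ga * K * fbar) by (apply Rmult_le_pos; nra).
  assert (Gb : 0 <= ga * K * bbar) by (apply Rmult_le_pos; nra).
  destruct IH as [Hp [Hr0 [Hrl [H1 H2]]]].
  split; [|split; [|split; [|split]]].
  - intros i j Hj. rewrite Tp by exact Hj. apply Rmult_lt_0_compat; [exact Hd|].
    specialize (Hp i j Hj). destruct i.
    + destruct (e1 j Hj); destruct (e2 j Hj); lra.
    + destruct (e3 j Hj); destruct (e4 j Hj); lra.
  - rewrite (Tp P1 0%nat) by lia. rewrite (Tp P2 0%nat) by lia.
    destruct (e1 0%nat ltac:(lia)); destruct (e2 0%nat ltac:(lia)).
    destruct (e3 0%nat ltac:(lia)); destruct (e4 0%nat ltac:(lia)).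
    rewrite !Rplus_assoc. apply ratio_step; [exact Hr0| lra | lra].
  - rewrite (Tp P1 (len P1)) by lia. rewrite (Tp P2 (len P2)) by lia.
    destruct (e1 (len P1) ltac:(lia)); destruct (e2 (len P1) ltac:(lia)).
    destruct (e3 (len P2) ltac:(lia)); destruct (e4 (len P2) ltac:(lia)).
    rewrite !Rplus_assoc. apply ratio_step; [exact Hrl| lra | lra].
  - intros j Hj. rewrite Tf by exact Hj. rewrite Tb by exact Hj. unfold lK.
    replace (1 - 0) with 1 by ring. rewrite !Rmult_1_l.
    split; [apply e1; lia | apply e2; lia].
  - intros j Hj. rewrite Tf by exact Hj. rewrite Tb by exact Hj.
    destruct j as [|[|j]]; [lia| |].
    + replace (lK K P2 1) with (1 - K) by reflexivity.
      replace (1 - (1 - K)) with K by ring. replace (1 - 1)%nat with 0%nat by lia.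
      destruct (e3 0%nat ltac:(lia)) as [_ A]. specialize (A eq_refl).
      destruct (e4 1%nat ltac:(lia)) as [_ B]. specialize (B ltac:(lia)).
      assert (K * (ga * fbar) <= K * fedge g fbar p f P2 0 t) by (apply Rmult_le_compat_l; lra).
      assert (K * (ga * bbar) <= K * bedge g len bbar p b P2 1 t) by (apply Rmult_le_compat_l; lra).
      split; [|split; [|intros; lia]]; lra.
    + replace (lK K P2 (S (S j))) with 0 by reflexivity.
      replace (1 - 0) with 1 by ring. rewrite !Rmult_1_l.
      replace (S (S j) - 1)%nat with (S j) by lia.
      destruct (e3 (S j) ltac:(lia)) as [A _].
      destruct (e4 (S (S j)) ltac:(lia)) as [_ B]. specialize (B ltac:(lia)).
      assert (ga * bbar * K <= ga * bbar * 1) by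
        (apply Rmult_le_compat_l; [apply Rmult_le_pos|]; lra).
      split; [exact A|split; [|intros; exact B]]. lra.
Qed.

End Gen.

Definition state := ((path_id -> nat -> R) * (path_id -> nat -> R) * (path_id -> nat -> R))%type.

Definition step (g : R -> R) (len : path_id -> nat) (l : path_id -> nat -> R)
  (delta fbar bbar : R) (s : state) : state :=
  let P := fst (fst s) in let F := snd (fst s) in let B := snd s in
  let p := fun i j (_ : nat) => P i j in
  let f := fun i j (_ : nat) => F i j in
  let b := fun i j (_ : nat) => B i j in
  ((fun i j => delta * (P i j + fedge g fbar p f i j 0 + bedge g len bbar p b i j 0)),
   (fun i j => (1 - l i j) * fedge g fbar p f i (j - 1) 0),
   (fun i j => (1 - l i j) * bedge g len bbar p b i j 0)).

Fixpoint traj g len l delta fbar bbar (s0 : state) (t : nat) : state :=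
  match t with
  | O => s0
  | S t' => step g len l delta fbar bbar (traj g len l delta fbar bbar s0 t')
  end.

Lemma traj_ok g len l delta fbar bbar s0 :
  is_trajectory g len l delta fbar bbar
    (fun i j t => fst (fst (traj g len l delta fbar bbar s0 t)) i j)
    (fun i j t => snd (fst (traj g len l delta fbar bbar s0 t)) i j)
    (fun i j t => snd (traj g len l delta fbar bbar s0 t) i j).
Proof.
  intro t. split; [|split]; intros; reflexivity.
Qed.


Lemma prod_keep_P1 K n : prod_keep (lK K P1) n = 1.
Proof. induction n; simpl; [reflexivity|]. rewrite IHn. ring. Qed.

Lemma prod_keep_P2 K n : (1 <= n)%nat -> prod_keep (lK K P2) n = K.
Proof.
  induction n as [|m IH]; intros Hn; [lia|].
  destruct m as [|m].
  - simpl. ring.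
  - change (prod_keep (lK K P2) (S (S m))) with
      (prod_keep (lK K P2) (S m) * (1 - lK K P2 (S (S m)))).
    rewrite IH by lia. simpl. ring.
Qed.

Lemma main_gen g len delta fbar bbar al ga K :
  (forall u v : R, 0 <= u -> 0 <= v -> u + v = 1 -> al <= u ->
     ga <= split_share g u v <= 1 /\ 0 <= split_share g v u <= 1 - ga) ->
  (1 <= len P2)%nat -> 0 < delta -> 0 < fbar -> 0 < bbar -> 0 < al < 1 ->
  0 < ga <= 1 -> 0 < K < 1 -> al * (1 - ga) <= (1 - al) * ga * K ->
    exists l : path_id -> nat -> R,
      (forall i j, (1 <= j <= len i)%nat -> 0 <= l i j <= 1) /\
      path_leak len l P1 < path_leak len l P2 /\
      exists p f b : path_id -> nat -> nat -> R,
        (forall i j, (j <= len i)%nat -> 0 < p i j 0%nat) /\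
        (forall i j, (1 <= j <= len i)%nat -> 0 <= f i j 0%nat /\ 0 <= b i j 0%nat) /\
        is_trajectory g len l delta fbar bbar p f b /\
        ~ Un_cv (fun t => nu_f p t P1) 1.
Proof.
  intros Hsh Hlen Hd Hf Hb Hal Hga HK HkK.
  exists (lK K). split.
  { intros i j _. destruct i; simpl; [lra|]. destruct (Nat.eqb j 1); lra. }
  split.
  { unfold path_leak. rewrite prod_keep_P1, prod_keep_P2 by exact Hlen. lra. }
  set (s0 := ((fun i (j : nat) => match i with P1 => 1 - al | P2 => al end),
              (fun i (j : nat) => match i with P1 => 0 | P2 => fbar end),
              (fun i (j : nat) => match i with P1 => 0 | P2 => bbar end)) : state).
  set (p := fun i j t => fst (fst (traj g len (lK K) delta fbar bbar s0 t)) i j).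
  set (f := fun i j t => snd (fst (traj g len (lK K) delta fbar bbar s0 t)) i j).
  set (b := fun i j t => snd (traj g len (lK K) delta fbar bbar s0 t) i j).
  assert (HT : is_trajectory g len (lK K) delta fbar bbar p f b) by apply traj_ok.
  assert (gk : ga * K <= 1) by nra.
  assert (I0 : Inv len al ga K fbar bbar p f b 0).
  { unfold Inv, p, f, b, s0; simpl. split; [|split; [|split; [|split]]].
    - intros i j _; destruct i; lra.
    - nra.
    - nra.
    - intros j _. split; split; nra.
    - intros j _. split; [|split; [|intros; nra]]; nra. }
  exists p, f, b. split; [|split; [|split]].
  - intros i j _; destruct i; unfold p, f, b, s0; simpl; lra.
  - intros i j _; destruct i; unfold p, f, b, s0; simpl; lra.
  - exact HT.
  - intros Hcv.
    assert (HI := inv_all g len delta fbar bbar al ga K Hsh Hlen Hd Hf Hb Hal Hga HK HkK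
                   p f b HT I0).
    destruct (Hcv al ltac:(lra)) as [N HN].
    specialize (HN N (Nat.le_refl N)).
    destruct (HI N) as [Hp [Hr _]].
    assert (A1 : 0 < p P1 0%nat N) by (apply Hp; lia).
    assert (A2 : 0 < p P2 0%nat N) by (apply Hp; lia).
    pose proof (ratio_le al _ _ A2 A1 Hr) as Hle.
    unfold R_dist, nu_f in HN. change (other P1) with P2 in HN.
    rewrite Rabs_left1 in HN by lra. lra.
Qed.

Lemma exK al ga : 0 < al < 1 -> 0 < ga <= 1 -> al * (1 - ga) < (1 - al) * ga ->
  exists K, 0 < K < 1 /\ al * (1 - ga) <= (1 - al) * ga * K.
Proof.
  intros Ha Hg H.
  assert (A0 : 0 <= al * (1 - ga)) by nra.
  assert (D0 : 0 < (1 - al) * ga) by nra.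
  set (A := al * (1 - ga)) in *. set (D := (1 - al) * ga) in *.
  exists ((A + D) / (2 * D)).
  assert (E : D * ((A + D) / (2 * D)) = (A + D) / 2) by (field; lra).
  split; [split|].
  - unfold Rdiv; apply Rmult_lt_0_compat; [lra| apply Rinv_0_lt_compat; lra].
  - apply (Rmult_lt_reg_l D); [lra|]. rewrite E. lra.
  - rewrite E. lra.
Qed.

Theorem proposition2 :
  forall (g : R -> R) (len : path_id -> nat) (delta fbar bbar : R),
    in_family g -> nonlinear g ->
    (1 <= len P2)%nat ->
    0 < delta < 1 -> 0 < fbar -> 0 < bbar ->
    exists l : path_id -> nat -> R,
      (forall i j, (1 <= j <= len i)%nat -> 0 <= l i j <= 1) /\
      path_leak len l P1 < path_leak len l P2 /\
      exists p f b : path_id -> nat -> nat -> R,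
        (forall i j, (j <= len i)%nat -> 0 < p i j 0%nat) /\
        (forall i j, (1 <= j <= len i)%nat -> 0 <= f i j 0%nat /\ 0 <= b i j 0%nat) /\
        is_trajectory g len l delta fbar bbar p f b /\
        ~ Un_cv (fun t => nu_f p t P1) 1.
Proof.
  intros g len delta fbar bbar Hfam [x0 [Hx0 Hgx]] Hlen Hd Hf Hb.
  pose proof Hfam as [_ [Hmono [Hrange [Hg0 Hg12]]]].
  assert (Hx0p : x0 <> 0) by (intro E; subst; apply Hgx; exact Hg0).
  assert (Hx0h : x0 <> 1/2) by (intro E; subst; apply Hgx; exact Hg12).
  assert (Hc12 : g x0 <= 1/2) by (rewrite <- Hg12; apply Hmono; lra).
  assert (Hc0 : 0 <= g x0) by (apply Hrange; lra).
  set (c := g x0) in *.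
  destruct (Rlt_dec x0 c) as [Hlt|Hge].
  - destruct (exK x0 c ltac:(lra) ltac:(lra) ltac:(nra)) as [K [HK HkK]].
    apply (main_gen g len delta fbar bbar x0 c K); try lra; try assumption.
    intros u v Hu Hv Huv Hxu. unfold split_share.
    destruct (Rlt_dec u v) as [H1|H1]; destruct (Rlt_dec v u) as [H2|H2]; try lra.
    + assert (c <= g u) by (apply Hmono; lra).
      assert (g u <= 1) by (apply Hrange; lra). lra.
    + assert (g v <= g (1/2)) by (apply Hmono; lra).
      assert (0 <= g v) by (apply Hrange; lra). lra.
  - assert (Hlt : c < x0) by (destruct (Rtotal_order x0 c) as [?|[?|?]]; lra).
    destruct (exK (1 - x0) (1 - c) ltac:(lra) ltac:(lra) ltac:(nra)) as [K [HK HkK]].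
    apply (main_gen g len delta fbar bbar (1 - x0) (1 - c) K); try lra; try assumption.
    intros u v Hu Hv Huv Hxu. unfold split_share.
    destruct (Rlt_dec u v) as [H1|H1]; destruct (Rlt_dec v u) as [H2|H2]; try lra.
    assert (g v <= c) by (apply Hmono; lra).
    assert (0 <= g v) by (apply Hrange; lra). lra.
Qed.
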